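(* For every $a\in(\frac13,\frac25)$ and $c>0$, the set $\Omega_{a,c}:=\{R\in\mathcal{A}_3\mid\|R\|^2-a\,\mathrm{scal}(R)^2\le c\}$ is Bianchi-convex but not convex.
   Context: $\mathcal{A}_3$ is the space of symmetric bilinear forms on $\Lambda^2\mathbb{R}^3$, viewed as self-adjoint endomorphisms of $\Lambda^2\mathbb{R}^3$ (with $e_i\wedge e_j$, $i<j$, orthonormal), with $\langle R,S\rangle=\mathrm{tr}(R\circ S)$, $\|R\|^2=\mathrm{tr}(R^2)$, and $\mathrm{scal}(R)=\mathrm{tr}(R)$. Supporting submanifold of a closed $C$ at $x_0\in\partial C$: a codimension-one submanifold $N\ni x_0$ such that for some open neighbourhood $U$ of $x_0$, $U\setminus N$ has two components $U_1,U_2$ with $C\cap\overline U\subseteq\overline{U_1}$; $\mathrm{II}^N_S(X,Y)=\langle\nabla_XY,\mathbf n_S\rangle$ with $\mathbf n$ the unit normal pointing away from $C$. $(T_1,T_2,T_3)\in\mathcal{A}_3^3$ satisfies the second Bianchi identity if for some orthonormal basis $(b_i)$ of $\mathbb{R}^3$, $T_i(b_j\wedge b_k)+T_j(b_k\wedge b_i)+T_k(b_i\wedge b_j)=0$ for all $i,j,k$. A closed $\Omega\subseteq\mathcal{A}_3$ is Bianchi-convex if for every $\epsilon>0$ and $R\in\partial\Omega$ there is a supporting submanifold $N$ of $\Omega$ in $R$ such that for all $S\in N$ and $(T_1,T_2,T_3)\in(T_SN)^3$ satisfying the second Bianchi identity, $\sum_i\mathrm{II}^N_S(T_i,T_i)\le\epsilon\sum_i\|T_i\|^2$.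 *)

(* Defs.v *)
From HB Require Import structures.
From mathcomp Require Import all_boot all_order all_algebra.
From mathcomp Require Import all_classical all_reals all_analysis.

Set Implicit Arguments.
Unset Strict Implicit.
Unset Printing Implicit Defensive.

Import Order.TTheory GRing.Theory Num.Theory.
Import numFieldNormedType.Exports.

Local Open Scope classical_set_scope.
Local Open Scope ring_scope.

(* Lambda^2 R^3 has the orthonormal basis w_0 = e1/\e2, w_1 = e1/\e3,  *)
(* w_2 = e2/\e3; an element of Lambda^2 R^3 is a column vector 'cV_3   *)
(* of coordinates in this basis.  A_3 (self-adjoint endomorphisms of   *)
(* Lambda^2 R^3) = symmetric 3x3 matrices in this basis.  We take as   *)
(* carrier of A_3 the 6-dimensional coordinate space 'rV[R]_6:          *)
(* coordinates 0,1,2 are the diagonal entries (0,0),(1,1),(2,2), and   *)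
(* coordinates 3,4,5 are the off-diagonal entries (0,1),(0,2),(1,2)    *)
(* (= (1,0),(2,0),(2,1)).  [A3toMx] is the corresponding (linear,      *)
(* bijective) map onto symmetric matrices.  The topology on A3 is the  *)
(* usual one of R^6; all metric notions (inner product, norms, unit    *)
(* normals, orthogonality) are defined through tr(R o S) as in the     *)
(* paper.                                                              *)

Section A3defs.
Variable R : realType.

Local Notation A3 := 'rV[R]_6.

Definition A3idx (i j : 'I_3) : 'I_6 :=
  inord (if i == j then nat_of_ord i else (i + j + 2)%N).

Definition A3toMx (x : A3) : 'M[R]_3 := \matrix_(i, j) x ord0 (A3idx i j).

Definition A3inner (x y : A3) : R := \tr (A3toMx x *m A3toMx y).
Definition A3sqnorm (x : A3) : R := A3inner x x.
Definition A3scal (x : A3) : R := \tr (A3toMx x).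

Definition Omega_ac (a c : R) : set A3 :=
  [set x : A3 | A3sqnorm x - a * A3scal x ^+ 2 <= c].

Definition wedge_pair (p : 'I_3) : 'I_3 * 'I_3 :=
  match nat_of_ord p with
  | 0%N => (inord 0, inord 1)
  | 1%N => (inord 0, inord 2)
  | _ => (inord 1, inord 2)
  end.

Definition wedge (u v : 'cV[R]_3) : 'cV[R]_3 :=
  \col_p (u (wedge_pair p).1 ord0 * v (wedge_pair p).2 ord0
          - u (wedge_pair p).2 ord0 * v (wedge_pair p).1 ord0).

(* Second Bianchi identity for (T_1,T_2,T_3) : the orthonormal basis
   (b_i) of R^3 is given by the columns of an orthogonal matrix O. *)
Definition second_bianchi (T : 'I_3 -> A3) : Prop :=
  exists O : 'M[R]_3, O^T *m O = 1%:M /\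
    forall i j k : 'I_3,
      A3toMx (T i) *m wedge (col j O) (col k O)
      + A3toMx (T j) *m wedge (col k O) (col i O)
      + A3toMx (T k) *m wedge (col i O) (col j O) = 0.

Fixpoint iterD (vs : seq A3) (f : A3 -> R) : A3 -> R :=
  match vs with
  | [::] => f
  | v :: vs' => fun x => derive (iterD vs' f) x v
  end.

Definition smooth_on (V : set A3) (f : A3 -> R) : Prop :=
  forall (vs : seq A3) (x : A3), V x ->
    {for x, continuous (iterD vs f)} /\ (forall v, derivable (iterD vs f) x v).

Definition codim1_submanifold (N : set A3) : Prop :=
  forall p, N p ->
    exists (V : set A3) (f : A3 -> R),
      [/\ open V, V p, smooth_on V f,
          (forall x, V x -> exists v : A3, derive f x v != 0)
        & N `&` V = [set x | V x /\ f x = 0]].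

Definition tangent_vec (N : set A3) (S X : A3) : Prop :=
  exists g : R -> A3,
    [/\ g 0 = S, (\forall t \near (0 : R), N (g t)),
        derivable g 0 1 & derive g 0 1 = X].

Definition boundary (C : set A3) : set A3 := closure C `\` interior C.

Definition two_components (D U1 U2 : set A3) : Prop :=
  exists p1 p2, [/\ D p1 /\ D p2,
    U1 = connected_component D p1, U2 = connected_component D p2,
    U1 <> U2 & D = U1 `|` U2].

Definition supporting_submanifold (C : set A3) (x0 : A3)
    (N U U1 U2 : set A3) : Prop :=
  [/\ codim1_submanifold N /\ N x0, open U /\ U x0,
      two_components (U `\` N) U1 U2
    & C `&` closure U `<=` closure U1].

(* nu is "the" unit normal to N at S pointing away from C (i.e. into U2,
   at points of N inside U). *)
Definition outer_unit_normal (N U U2 : set A3) (S nu : A3) : Prop :=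
  [/\ A3sqnorm nu = 1,
      (forall X, tangent_vec N S X -> A3inner X nu = 0)
    & (U S -> exists2 d : R, 0 < d &
          forall t : R, 0 < t < d -> U2 (S + t *: nu))].

(* Y is a vector field extending the tangent vector X at S: tangent to N
   near S, differentiable at S, Y S = X.  Then II^N_S(X,X) =
   <nabla_X Y, nu> = <derive Y S X, nu> (flat connection of A3). *)
Definition tangent_extension (N : set A3) (S X : A3) (Y : A3 -> A3) : Prop :=
  [/\ Y S = X, differentiable Y S
    & (\forall q \near S, N q -> tangent_vec N q (Y q))].

Definition bianchi_convex (Om : set A3) : Prop :=
  closed Om /\
  forall eps : R, 0 < eps -> forall x0, boundary Om x0 ->
    exists N U U1 U2, supporting_submanifold Om x0 N U U1 U2 /\
      forall S, N S -> forall nu, outer_unit_normal N U U2 S nu ->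
      forall T : 'I_3 -> A3, (forall i, tangent_vec N S (T i)) ->
        second_bianchi T ->
      forall Y : 'I_3 -> A3 -> A3, (forall i, tangent_extension N S (T i) (Y i)) ->
        \sum_i A3inner (derive (Y i) S (T i)) nu
          <= eps * \sum_i A3sqnorm (T i).

Definition convex_A3 (Om : set A3) : Prop :=
  forall x y (t : R), Om x -> Om y -> 0 <= t <= 1 ->
    Om ((1 - t) *: x + t *: y).

End A3defs.

(* Main.v *)
Require Import Defs.
From HB Require Import structures.
From mathcomp Require Import all_boot all_order all_algebra.
From mathcomp Require Import all_classical all_reals all_analysis.
From mathcomp Require Import ring lra.
Import Order.TTheory GRing.Theory Num.Theory.
Import numFieldNormedType.Exports.
Local Open Scope ring_scope.

Lemma sum3 (V : nmodType) (f : 'I_3 -> V) :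
  \sum_i f i = f (inord 0) + f (inord 1) + f (inord 2).
Proof.
rewrite !big_ord_recl big_ord0 addr0 addrA.
by congr (f _ + f _ + f _); apply/val_inj; rewrite /= inordK.
Qed.

Lemma ord3_cases (i : 'I_3) : i = inord 0 \/ i = inord 1 \/ i = inord 2.
Proof.
case: i => [[|[|[|//]]] Hi]; [left|right; left|right; right];
  by apply/val_inj; rewrite /= inordK.
Qed.


Lemma alg_core (R : realFieldType) (a a00 a01 a02 a11 a12 a22 b00 b01 b02 b11 b12 b22 c00 c01 c02 c11 c12 c22 : R) :
  a <= 2/5 ->
  a00 + b01 + c02 = 0 -> a01 + b11 + c12 = 0 -> a02 + b12 + c22 = 0 ->
  0 <= (a00^+2 + a11^+2 + a22^+2 + 2 * (a01^+2 + a02^+2 + a12^+2) - a * (a00 + a11 + a22)^+2)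
     + (b00^+2 + b11^+2 + b22^+2 + 2 * (b01^+2 + b02^+2 + b12^+2) - a * (b00 + b11 + b22)^+2)
     + (c00^+2 + c11^+2 + c22^+2 + 2 * (c01^+2 + c02^+2 + c12^+2) - a * (c00 + c11 + c22)^+2).
Proof.
move=> ha h0 h1 h2.
have -> : a00 = - (b01 + c02) by lra.
have -> : b11 = - (a01 + c12) by lra.
have -> : c22 = - (a02 + b12) by lra.
set S := (X in 0 <= X).
have E : S = (2/5 - a) * ((- (b01 + c02) + a11 + a22)^+2 + (b00 - (a01 + c12) + b22)^+2 + (c00 + c11 - (a02 + b12))^+2)
  + 13/5 * (a01 + 2/13*b00 + 2/13*b22 + 3/13*c12)^+2
  + 13/5 * (a02 + 3/13*b12 + 2/13*c00 + 2/13*c11)^+2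
  + 3/5 * (a11 - 2/3*a22 + 2/3*b01 + 2/3*c02)^+2
  + 2 * a12^+2
  + 1/3 * (a22 + 2*b01 + 2*c02)^+2
  + 7/13 * (b00 - 6/7*b22 + 4/7*c12)^+2
  + (b01 - c02)^+2
  + 2 * b02^+2
  + 32/13 * (b12 + 1/8*c00 + 1/8*c11)^+2
  + 1/7 * (b22 + 4*c12)^+2
  + 1/2 * (c00 - c11)^+2
  + 2 * c01^+2.
  by rewrite /S; field.
rewrite E.
have hp : 0 <= 2/5 - a by rewrite subr_ge0.
repeat apply: addr_ge0; first [apply: sqr_ge0 | apply: mulr_ge0; [lra | repeat apply: addr_ge0; apply: sqr_ge0]].
Qed.

Section B.
Variable R : realType.

Lemma lagrange (p0 p1 p2 q0 q1 q2 r0 r1 r2 s0 s1 s2 : R) :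
  (p0 * q1 - p1 * q0) * (r0 * s1 - r1 * s0) +
  (p0 * q2 - p2 * q0) * (r0 * s2 - r2 * s0) +
  (p1 * q2 - p2 * q1) * (r1 * s2 - r2 * s1) =
  (p0 * r0 + p1 * r1 + p2 * r2) * (q0 * s0 + q1 * s1 + q2 * s2) -
  (p0 * s0 + p1 * s1 + p2 * s2) * (q0 * r0 + q1 * r1 + q2 * r2).
Proof. ring. Qed.

Lemma wedgeE0 (u v : 'cV[R]_3) :
  wedge u v (inord 0) ord0 = u (inord 0) ord0 * v (inord 1) ord0 - u (inord 1) ord0 * v (inord 0) ord0.
Proof. by rewrite /wedge mxE /wedge_pair inordK. Qed.
Lemma wedgeE1 (u v : 'cV[R]_3) :
  wedge u v (inord 1) ord0 = u (inord 0) ord0 * v (inord 2) ord0 - u (inord 2) ord0 * v (inord 0) ord0.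
Proof. by rewrite /wedge mxE /wedge_pair inordK. Qed.
Lemma wedgeE2 (u v : 'cV[R]_3) :
  wedge u v (inord 2) ord0 = u (inord 1) ord0 * v (inord 2) ord0 - u (inord 2) ord0 * v (inord 1) ord0.
Proof. by rewrite /wedge mxE /wedge_pair inordK. Qed.

Definition Wof (u0 u1 u2 : 'cV[R]_3) : 'M[R]_3 :=
  \matrix_(p, q) (if nat_of_ord q == 0%N then u0 p ord0 else if nat_of_ord q == 1%N then u1 p ord0 else u2 p ord0).

Lemma inord_eqE (i j : nat) : (i < 3)%N -> (j < 3)%N -> ((inord i : 'I_3) == inord j) = (i == j).
Proof. by move=> hi hj; rewrite -val_eqE /= !inordK. Qed.


Lemma trE (X : 'M[R]_3) :
  \tr X = X (inord 0) (inord 0) + X (inord 1) (inord 1) + X (inord 2) (inord 2).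
Proof. by rewrite /mxtrace sum3. Qed.

Lemma trsqE (X : 'M[R]_3) : X^T = X -> \tr (X *m X) =
  X (inord 0) (inord 0) ^+ 2 + X (inord 1) (inord 1) ^+ 2 + X (inord 2) (inord 2) ^+ 2
  + 2 * (X (inord 0) (inord 1) ^+ 2 + X (inord 0) (inord 2) ^+ 2 + X (inord 1) (inord 2) ^+ 2).
Proof.
move=> hX.
have s : forall i j, X j i = X i j by move=> i j; rewrite -{1}hX mxE.
rewrite /mxtrace sum3 !mxE !sum3 (s (inord 0) (inord 1)) (s (inord 0) (inord 2)) (s (inord 1) (inord 2)).
ring.
Qed.

Lemma bianchi_mx (a : R) (M0 M1 M2 O : 'M[R]_3) :
  a <= 2/5 -> M0^T = M0 -> M1^T = M1 -> M2^T = M2 -> O^T *m O = 1%:M ->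
  M0 *m wedge (col (inord 1) O) (col (inord 2) O) + M1 *m wedge (col (inord 2) O) (col (inord 0) O)
   + M2 *m wedge (col (inord 0) O) (col (inord 1) O) = 0 ->
  0 <= (\tr (M0 *m M0) - a * \tr M0 ^+ 2) + (\tr (M1 *m M1) - a * \tr M1 ^+ 2)
       + (\tr (M2 *m M2) - a * \tr M2 ^+ 2).
Proof.
move=> ha h0 h1 h2 hO hc.
set u0 := wedge (col (inord 1) O) (col (inord 2) O) in hc *.
set u1 := wedge (col (inord 2) O) (col (inord 0) O) in hc *.
set u2 := wedge (col (inord 0) O) (col (inord 1) O) in hc *.
set W := Wof u0 u1 u2.
have hd : forall i j : 'I_3, O (inord 0) i * O (inord 0) j + O (inord 1) i * O (inord 1) j
    + O (inord 2) i * O (inord 2) j = (i == j)%:R.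
  move=> i j; have := congr1 (fun M : 'M[R]_3 => M i j) hO; rewrite !mxE sum3 !mxE => <-.
  by [].
have hW0 : forall r, W r (inord 0) = u0 r ord0 by move=> r; rewrite /W mxE inordK.
have hW1 : forall r, W r (inord 1) = u1 r ord0 by move=> r; rewrite /W mxE inordK.
have hW2 : forall r, W r (inord 2) = u2 r ord0 by move=> r; rewrite /W mxE inordK.
clearbody W.
have hWW : W^T *m W = 1%:M.
  apply/matrixP => i j; rewrite mxE sum3 !mxE.
  case: (ord3_cases i) => [->|[->|->]]; case: (ord3_cases j) => [->|[->|->]];
  rewrite !(hW0, hW1, hW2) /u0 /u1 /u2 !(wedgeE0, wedgeE1, wedgeE2) !mxE lagrange !hd
    !inord_eqE //=; ring.
clearbody u0 u1 u2.
have hWWt := mulmx1C hWW.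
have tr1 : forall M, \tr (W^T *m M *m W) = \tr M.
  by move=> M; rewrite mxtrace_mulC mulmxA hWWt mul1mx.
have tr2 : forall M, \tr ((W^T *m M *m W) *m (W^T *m M *m W)) = \tr (M *m M).
  move=> M; rewrite !mulmxA -(mulmxA (W^T *m M) W) hWWt mulmx1 -(mulmxA (W^T) M M).
  exact: tr1.
have sym : forall M : 'M[R]_3, M^T = M -> (W^T *m M *m W)^T = W^T *m M *m W.
  by move=> M hM; rewrite !trmx_mul trmxK hM mulmxA.
have cons : forall m, (W^T *m M0 *m W) m (inord 0) + (W^T *m M1 *m W) m (inord 1)
    + (W^T *m M2 *m W) m (inord 2) = 0.
  move=> m.
  have hp : forall p, (M0 *m u0 + M1 *m u1 + M2 *m u2) p ord0 = 0 by move=> p; rewrite hc mxE.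
  transitivity (\sum_p W p m * (M0 *m u0 + M1 *m u1 + M2 *m u2) p ord0).
    rewrite !(mxE, sum3, hW0, hW1, hW2); ring.
  by rewrite big1 // => p _; rewrite hp mulr0.
rewrite -(tr2 M0) -(tr2 M1) -(tr2 M2) -(tr1 M0) -(tr1 M1) -(tr1 M2).
rewrite !trsqE ?sym // !trE.
have s : forall (X : 'M[R]_3) i j, X^T = X -> X j i = X i j by move=> X i j hX; rewrite -{1}hX mxE.
have c0 := cons (inord 0); have c1 := cons (inord 1); have c2 := cons (inord 2).
rewrite (s _ (inord 0) (inord 1)) ?sym // in c1.
rewrite (s _ (inord 0) (inord 2)) ?sym // in c2.
rewrite (s _ (inord 1) (inord 2)) ?sym // in c2.
by apply: alg_core.
Qed.
End B.

Lemma A3toMx_sym (R : realType) (x : 'rV[R]_6) : (A3toMx x)^T = A3toMx x.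
Proof.
apply/matrixP => i j; rewrite !mxE /A3idx eq_sym.
by case: eqP => [->//|_]; rewrite (addnC j i).
Qed.

Lemma bianchi_nonneg (R : realType) (a : R) (T : 'I_3 -> 'rV[R]_6) :
  a <= 2/5 -> second_bianchi T ->
  0 <= \sum_i (A3sqnorm (T i) - a * A3scal (T i) ^+ 2).
Proof.
move=> ha [Om [hO hB]].
rewrite sum3 /A3sqnorm /A3inner /A3scal.
apply: bianchi_mx ha _ _ _ hO (hB (inord 0) (inord 1) (inord 2));
  exact: A3toMx_sym.
Qed.

Set Implicit Arguments.
Unset Strict Implicit.
Unset Printing Implicit Defensive.
Local Open Scope classical_set_scope.
Local Open Scope ring_scope.

Section An.
Variable R : realType.
Local Notation A3 := 'rV[R]_6.

Definition cd (x : A3) (k : nat) : R := x ord0 (inord k).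
Lemma cdD x y k : cd (x + y) k = cd x k + cd y k. Proof. by rewrite /cd mxE. Qed.
Lemma cdZ t x k : cd (t *: x) k = t * cd x k. Proof. by rewrite /cd mxE. Qed.
Lemma cdN x k : cd (- x) k = - cd x k. Proof. by rewrite /cd mxE. Qed.
Lemma cdB x y k : cd (x - y) k = cd x k - cd y k. Proof. by rewrite /cd !mxE. Qed.
Lemma cd0 k : cd 0 k = 0. Proof. by rewrite /cd mxE. Qed.
Definition mk6 (l : seq R) : A3 := \row_(i < 6) nth 0 l i.
Lemma cd_mk6 l k : (k < 6)%N -> cd (mk6 l) k = nth 0 l k.
Proof. by move=> h; rewrite /cd mxE inordK. Qed.

Definition Ip (x y : A3) : R := cd x 0 * cd y 0 + cd x 1 * cd y 1 + cd x 2 * cd y 2 +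
  2 * (cd x 3 * cd y 3 + cd x 4 * cd y 4 + cd x 5 * cd y 5).
Definition Sc (x : A3) : R := cd x 0 + cd x 1 + cd x 2.

Lemma innerE (x y : A3) : A3inner x y = Ip x y.
Proof.
rewrite /A3inner /mxtrace /A3toMx /Ip /cd.
rewrite !big_ord_recr big_ord0 /= !mxE !big_ord_recr big_ord0 /= !mxE /A3idx /=.
rewrite !big_ord0 !addn0 !add0n /=; ring.
Qed.

Lemma scalE (x : A3) : A3scal x = Sc x.
Proof.
rewrite /A3scal /mxtrace /A3toMx /Sc /cd.
rewrite !big_ord_recr big_ord0 /= !mxE /A3idx /=; ring.
Qed.

Variable a : R.
Definition Bf (x y : A3) : R := Ip x y - a * (Sc x * Sc y).
Definition Fq (x : A3) : R := Bf x x.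

Lemma sqnE x : A3sqnorm x - a * A3scal x ^+ 2 = Fq x.
Proof. by rewrite /A3sqnorm innerE scalE /Fq /Bf expr2. Qed.

Ltac cdsimp := rewrite /Fq /Bf /Ip /Sc ?(cdD, cdZ, cdN, cdB, cd0).

Lemma FqD x y : Fq (x + y) = Fq x + 2 * Bf x y + Fq y.
Proof. cdsimp; ring. Qed.
Lemma FqZ t x : Fq (t *: x) = t ^+ 2 * Fq x.
Proof. cdsimp; ring. Qed.
Lemma Bf_sym x y : Bf x y = Bf y x.
Proof. cdsimp; ring. Qed.

Definition idv : A3 := mk6 [:: 1; 1; 1; 0; 0; 0].
Definition Gv (S : A3) : A3 := S - (a * Sc S) *: idv.
Lemma IpG S v : Ip (Gv S) v = Bf S v.
Proof. rewrite /Gv; cdsimp; rewrite /idv !cd_mk6 //=; ring. Qed.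

Section CV.
Context {T : Type} (Fl : set_system T) {FF : Filter Fl}.
Lemma cvg_cd (u : T -> A3) x k : u @ Fl --> x -> (fun t => cd (u t) k) @ Fl --> cd x k.
Proof.
move=> hu; exact: (@continuous_cvg _ _ _ Fl FF u (fun M : A3 => M ord0 (inord k)) x
  (@coord_continuous _ 1 6 ord0 (inord k) x) hu).
Qed.
Lemma cvgD' (f g : T -> R) (p q : R) : f @ Fl --> p -> g @ Fl --> q -> (fun t => f t + g t) @ Fl --> p + q.
Proof. exact: cvgD. Qed.
Lemma cvgB' (f g : T -> R) (p q : R) : f @ Fl --> p -> g @ Fl --> q -> (fun t => f t - g t) @ Fl --> p - q.
Proof. exact: cvgB. Qed.
Lemma cvgM' (f g : T -> R) (p q : R) : f @ Fl --> p -> g @ Fl --> q -> (fun t => f t * g t) @ Fl --> p * q.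
Proof. exact: cvgM. Qed.
Lemma cvgN' (f : T -> R) (p : R) : f @ Fl --> p -> (fun t => - f t) @ Fl --> - p.
Proof. exact: cvgN. Qed.
End CV.

Ltac polycvg := repeat match goal with
 | |- (fun _ => cd _ _) @ _ --> _ => apply: cvg_cd; first [eassumption | exact: cvg_id]
 | |- (fun _ => _ + _) @ _ --> _ => apply: cvgD'
 | |- (fun _ => _ * _) @ _ --> _ => apply: cvgM'
 | |- (fun _ => - _) @ _ --> _ => apply: cvgN'
 | |- _ => exact: cvg_cst
end.

Lemma cvg_Bf {T : Type} (Fl : set_system T) {FF : Filter Fl} (u w : T -> A3) x y :
  u @ Fl --> x -> w @ Fl --> y -> (fun t => Bf (u t) (w t)) @ Fl --> Bf x y.
Proof. move=> hu hw; rewrite /Bf /Ip /Sc. polycvg. Qed.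

Lemma cvg_Ip {T : Type} (Fl : set_system T) {FF : Filter Fl} (u w : T -> A3) x y :
  u @ Fl --> x -> w @ Fl --> y -> (fun t => Ip (u t) (w t)) @ Fl --> Ip x y.
Proof. move=> hu hw; rewrite /Ip; polycvg. Qed.

Lemma Fq_cont : continuous Fq.
Proof. move=> x; apply: (@cvg_Bf _ (nbhs x) _ id id x x); exact: cvg_id. Qed.


Lemma poly2_derive (f : A3 -> R) x v (D E : R) :
  (forall h : R, f (h *: v + x) = f x + h * D + h ^+ 2 * E) ->
  derivable f x v /\ derive f x v = D.
Proof.
move=> hf.
have hq : (fun h : R => h^-1 *: ((f \o shift x) (h *: v) - f x)) @ 0^' --> D.
  have hg : (fun h : R => D + h * E) @ 0^' --> D + 0 * E.
    apply: cvgD'; first exact: cvg_cst.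
    by apply: cvgM'; [exact: (@cvg_within _ (nbhs (0:R)) _ (fun y : R => y != 0)) | exact: cvg_cst].
  rewrite mul0r addr0 in hg.
  apply: cvg_trans hg; apply: near_eq_cvg.
  rewrite near_withinE; apply: nearW => h /= hh.
  rewrite hf; have hh0 : h != 0 by exact: hh.
  by rewrite /GRing.scale /=; field.
split; first exact: cvgP hq.
exact: cvg_lim hq.
Qed.

Definition Fcl (al : R) (l : A3) (be : R) : A3 -> R := fun x => al * Fq x + Ip l x + be.

Lemma Fcl_derive al l be x v :
  derivable (Fcl al l be) x v /\ derive (Fcl al l be) x v = Fcl 0 ((2 * al) *: Gv v) (Ip l v) x.
Proof.
have [hd he] := @poly2_derive (Fcl al l be) x v (2 * al * Bf x v + Ip l v) (al * Fq v)
  ltac:(by move=> h; rewrite /Fcl; cdsimp; ring).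
split => //; rewrite he /Fcl.
have -> : Ip ((2 * al) *: Gv v) x = 2 * al * Bf v x by rewrite -IpG /Ip !cdZ; ring.
rewrite Bf_sym; ring.
Qed.

Lemma iterD_Fcl (c : R) vs : exists al l be, Defs.iterD vs (fun x => Fq x - c) = Fcl al l be.
Proof.
elim: vs => [|v vs [al [l [be IH]]]] /=.
  by exists 1, 0, (-c); apply: funext => x; rewrite /Fcl; cdsimp; ring.
exists 0, ((2 * al) *: Gv v), (Ip l v); apply: funext => x; rewrite IH.
exact: (Fcl_derive al l be x v).2.
Qed.

Lemma cvg_Fcl al l be {T : Type} (Fl : set_system T) {FF : Filter Fl} (u : T -> A3) x :
  u @ Fl --> x -> (fun t => Fcl al l be (u t)) @ Fl --> Fcl al l be x.
Proof. move=> hu; rewrite /Fcl /Fq /Bf /Ip /Sc; polycvg. Qed.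

Lemma Fcl_cont al l be : continuous (Fcl al l be).
Proof. move=> x; apply: (@cvg_Fcl al l be _ (nbhs x) _ id x); exact: cvg_id. Qed.

Lemma smooth_F (c : R) V : smooth_on V (fun x => Fq x - c).
Proof.
move=> vs x _; have [al [l [be ->]]] := iterD_Fcl c vs.
by split; [exact: Fcl_cont | move=> v; exact: (Fcl_derive al l be x v).1].
Qed.

Lemma derive_F (c : R) x v : derive (fun x => Fq x - c) x v = 2 * Bf x v.
Proof.
have := (@poly2_derive (fun x => Fq x - c) x v (2 * Bf x v) (Fq v)
  ltac:(by move=> h; cdsimp; ring)).2.
done.
Qed.

Lemma Ip_self0 z y : Ip z z <= 0 -> Ip z y = 0.
Proof.
rewrite /Ip => h.
have e0 : cd z 0 = 0 by nra.
have e1 : cd z 1 = 0 by nra.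
have e2 : cd z 2 = 0 by nra.
have e3 : cd z 3 = 0 by nra.
have e4 : cd z 4 = 0 by nra.
have e5 : cd z 5 = 0 by nra.
rewrite e0 e1 e2 e3 e4 e5; ring.
Qed.

Lemma Gv_pos S : Fq S != 0 -> 0 < Ip (Gv S) (Gv S).
Proof.
move=> hS; rewrite ltNge; apply/negP => h; move: (@Ip_self0 (Gv S) S h).
by rewrite IpG; apply/eqP.
Qed.

End An.

Section Top.
Variables (R : realType) (a c : R).
Local Notation A3 := 'rV[R]_6.
Local Notation F := (Fq a).

Definition Nc : set A3 := [set x | F x = c].
Definition Ltc : set A3 := [set x | F x < c].
Definition Gtc : set A3 := [set x | c < F x].
Definition Dc : set A3 := setT `\` Nc.

Lemma open_Ltc : open Ltc.
Proof. exact: ((continuousP _).1 (@Fq_cont _ a) _ (open_lt (y:=c))). Qed.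
Lemma open_Gtc : open Gtc.
Proof. exact: ((continuousP _).1 (@Fq_cont _ a) _ (open_gt (y:=c))). Qed.
Lemma closed_Lec : closed [set x : A3 | F x <= c].
Proof. exact: ((continuous_closedP _).1 (@Fq_cont _ a) _ (closed_le (y:=c))). Qed.
Lemma closed_Gec : closed [set x : A3 | c <= F x].
Proof. exact: ((continuous_closedP _).1 (@Fq_cont _ a) _ (closed_ge (y:=c))). Qed.

Lemma OmegaE : Omega_ac a c = [set x | F x <= c].
Proof. by apply/funext => x; rewrite /Omega_ac /= sqnE. Qed.

Lemma boundary_eq x0 : boundary (Omega_ac a c) x0 -> F x0 = c.
Proof.
rewrite OmegaE /boundary => -[hcl hint].
have hle : F x0 <= c by move: hcl; rewrite -(closure_id _).1 //; exact: closed_Lec.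
apply/eqP; rewrite eq_le hle /=; rewrite leNgt; apply/negP => hlt; apply: hint.
have := open_Ltc; rewrite openE => /(_ x0 hlt).
apply: interiorS => y /=; exact: ltW.
Qed.

Lemma seg_cc (P v : A3) : (forall s : R, 0 <= s <= 1 -> Dc (P + s *: v)) ->
  connected_component Dc P (P + v).
Proof.
move=> hs.
exists ((fun s : R => P + s *: v) @` `[0, 1]); last first.
  by exists 1; [rewrite /= in_itv /= ler01 lexx | rewrite scale1r].
split.
- by exists 0; [rewrite /= in_itv /= lexx ler01 | rewrite scale0r addr0].
- by move=> _ [s hs' <-]; apply: hs; move: hs'; rewrite /= in_itv.
- apply: connected_continuous_connected; first exact: segment_connected.
  apply: continuous_subspaceT => s.
  apply: (@continuousD _ _ _ (fun _ : R => P) (fun s : R => s *: v)); first exact: cvg_cst.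
  exact: scalel_continuous.
Qed.

Ltac cdsimp5 := rewrite /Fq /Bf /Ip /Sc ?(cdD, cdZ, cdN, cdB, cd0).

Lemma FqDZ (Q v : A3) (s : R) : F (Q + s *: v) = F Q + 2 * s * Bf a Q v + s ^+ 2 * F v.
Proof. cdsimp5; ring. Qed.

Lemma Ltc_cc0 (hc0 : 0 < c) x : Ltc x -> connected_component Dc 0 x.
Proof.
move=> hx; rewrite /Ltc /= in hx; rewrite -[x]add0r; apply: seg_cc => s /andP[s0 s1].
split => //; rewrite /Nc /= add0r FqZ => e.
have h2 : s ^+ 2 <= 1 by nra.
have : s ^+ 2 * F x < c.
  case: (lerP (F x) 0) => hf; first by nra.
  by nra.
by rewrite e ltxx.
Qed.

Lemma segGt (hc0 : 0 < c) Q v : c < F Q -> 0 <= Bf a Q v -> 0 <= F v ->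
  connected_component Dc Q (Q + v).
Proof.
move=> hQ hB hv; apply: seg_cc => s /andP[s0 s1]; split => //; rewrite /Nc /= FqDZ => e.
have := mulr_ge0 s0 hB; have := mulr_ge0 (sqr_ge0 s) hv; lra.
Qed.

Lemma link (hc0 : 0 < c) x z : c < F x -> c < F z -> 0 <= Bf a x z ->
  connected_component Dc x z.
Proof.
move=> hx hz hB.
have h1 := segGt hc0 hx hB (ltW (lt_trans hc0 hz)).
have h2 := segGt hc0 hz (v:=x) _ (ltW (lt_trans hc0 hx)).
rewrite Bf_sym addrC in h2; have {}h2 := h2 hB.
exact: connected_component_trans h1 (connected_component_sym h2).
Qed.

Definition e3 : A3 := mk6 [:: 0; 0; 0; 1; 0; 0].
Definition e4 : A3 := mk6 [:: 0; 0; 0; 0; 1; 0].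
Definition p2 : A3 := (c + 1) *: e4.

Lemma F_e3 k : F (k *: e3) = 2 * k ^+ 2.
Proof. rewrite /e3; cdsimp5; rewrite !cd_mk6 //=; ring. Qed.
Lemma F_e4 k : F (k *: e4) = 2 * k ^+ 2.
Proof. rewrite /e4; cdsimp5; rewrite !cd_mk6 //=; ring. Qed.
Lemma Bf_e34 k l : Bf a (k *: e3) (l *: e4) = 0.
Proof. rewrite /e3 /e4; cdsimp5; rewrite !cd_mk6 //=; ring. Qed.
Lemma BfZr x k v : Bf a x (k *: v) = k * Bf a x v.
Proof. cdsimp5; ring. Qed.

Lemma Gtc_cc (hc0 : 0 < c) x : Gtc x -> connected_component Dc p2 x.
Proof.
move=> hx.
have hL : forall k, (k = c + 1) \/ (k = - (c + 1)) -> c < F (k *: e3).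
  by move=> k [->|->]; rewrite F_e3; nra.
have hp2 : c < F p2 by rewrite /p2 F_e4; nra.
case: (lerP 0 (Bf a x e3)) => hb.
- have h1 : connected_component Dc x ((c + 1) *: e3).
    by apply: link => //; [apply: hL; left | rewrite BfZr; apply: mulr_ge0 => //; lra].
  have h2 : connected_component Dc ((c + 1) *: e3) p2.
    by apply: link => //; [apply: hL; left | rewrite /p2 Bf_e34].
  exact: connected_component_sym (connected_component_trans h1 h2).
- have h1 : connected_component Dc x ((- (c + 1)) *: e3).
    by apply: link => //; [apply: hL; right | rewrite BfZr; nra].
  have h2 : connected_component Dc ((- (c + 1)) *: e3) p2.
    by apply: link => //; [apply: hL; right | rewrite /p2 Bf_e34].
  exact: connected_component_sym (connected_component_trans h1 h2).
Qed.

Lemma cc_sub (P : set A3) p : open P -> closed (P `|` Nc) -> P p -> ~ Nc p ->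
  connected_component Dc p `<=` P.
Proof.
move=> oP cP hp hpN.
have hC := @component_connected _ Dc p.
have CD := @connected_component_sub _ Dc p.
have e : connected_component Dc p `&` P = connected_component Dc p.
  apply: hC.
  - by exists p; split => //; apply: connected_component_refl.
  - by exists P.
  - exists (P `|` Nc) => //.
    apply/seteqP; split => y [hy1 hy2]; split => //; first by left.
    case: hy2 => // hN; have [_ hN'] := CD _ hy1; by [].
move=> y hy; have : (connected_component Dc p `&` P) y by rewrite e.
by case.
Qed.

Lemma cc_sub_Lt (hc0 : 0 < c) : connected_component Dc 0 `<=` Ltc.
Proof.
apply: cc_sub; first exact: open_Ltc.
- rewrite (_ : Ltc `|` Nc = [set x | F x <= c]); first exact: closed_Lec.
  apply/seteqP; split => y /=; first by case => h; [exact: ltW | rewrite h].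
  by rewrite le_eqVlt => /orP [/eqP h|h]; [right | left].
- by rewrite /Ltc /= /Fq; cdsimp5; lra.
- by rewrite /Nc /= /Fq; cdsimp5 => h; lra.
Qed.

Lemma cc_sub_Gt (hc0 : 0 < c) : connected_component Dc p2 `<=` Gtc.
Proof.
have hp2 : c < F p2 by rewrite /p2 F_e4; nra.
apply: cc_sub; first exact: open_Gtc.
- rewrite (_ : Gtc `|` Nc = [set x | c <= F x]); first exact: closed_Gec.
  apply/seteqP; split => y /=; first by case => h; [exact: ltW | rewrite h].
  by rewrite le_eqVlt => /orP [/eqP h|h]; [right | left].
- exact: hp2.
- by rewrite /Nc /= => h; rewrite h ltxx in hp2.
Qed.

Lemma two_comp (hc0 : 0 < c) :
  two_components Dc (connected_component Dc 0) (connected_component Dc p2).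
Proof.
have hp2 : c < F p2 by rewrite /p2 F_e4; nra.
have hF0 : F 0 = 0 by rewrite /Fq; cdsimp5; ring.
have D0 : Dc 0 by split => //; rewrite /Nc /= hF0 => h; lra.
have Dp2 : Dc p2 by split => //; rewrite /Nc /= => h; rewrite h ltxx in hp2.
exists 0, p2; split => //.
- move=> e.
  have : connected_component Dc p2 0 by rewrite -e; exact: connected_component_refl.
  by move/(cc_sub_Gt hc0); rewrite /Gtc /= hF0; lra.
- apply/seteqP; split => x.
  + move=> [_ hN]; case: (ltgtP (F x) c) => h.
    * by left; exact: Ltc_cc0.
    * by right; exact: Gtc_cc.
    * by exfalso; exact: hN.
  + by case => h; exact: connected_component_sub h.
Qed.

End Top.

Section T6.
Variables (R : realType) (a c : R).
Local Notation A3 := 'rV[R]_6.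
Local Notation F := (Fq a).

Lemma closure_Lt (hc0 : 0 < c) x : F x <= c -> closure (Ltc a c) x.
Proof.
move=> hx B hB.
have hn : nbhs (1:R) [set s : R | B (s *: x)].
  have hc1 := @scalel_continuous _ _ x 1. move: hB; rewrite -{1}[x]scale1r => hB. exact: hc1 _ hB.
move/nbhs_ballP : hn => [e e0 he].
pose d := e / (2 * (1 + e)).
have {}e0 : 0 < e by exact: e0.
have hd1 : d * (2 * (1 + e)) = e by rewrite /d divfK //; apply: lt0r_neq0; lra.
have d0 : 0 < d by rewrite /d; apply: divr_gt0 => //; lra.
have de : d < e by nra.
have dh : d < 1/2 by nra.
exists ((1 - d) *: x); split.
- rewrite /Ltc /= FqZ.
  have hs : (1 - d) ^+ 2 < 1 by nra.
  have hs0 : 0 <= (1 - d) ^+ 2 by exact: sqr_ge0.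
  case: (lerP (F x) 0) => hf; first by nra.
  have hs1 : 0 < 1 - (1 - d) ^+ 2 by lra.
  have := mulr_gt0 hs1 hf; nra.
- apply: he; rewrite -ball_normE /ball_ /=.
  rewrite opprB addrC subrK ger0_norm; lra.
Qed.

Lemma normal_sign S nu (d : R) : F S = c -> 0 < d ->
  (forall t, 0 < t < d -> c < F (S + t *: nu)) -> 0 <= Bf a S nu.
Proof.
move=> hS hd h; rewrite leNgt; apply/negP => hB.
set q := F nu; set B := Bf a S nu in hB *.
pose b := - B.
have b0 : 0 < b by rewrite /b; lra.
pose w := d * `|q|.
have w0 : 0 <= w by rewrite /w; apply: mulr_ge0; [lra | exact: normr_ge0].
pose t := d * b / (2 * (b + w)).
have ht : t * (2 * (b + w)) = d * b by rewrite /t divfK //; apply: lt0r_neq0; lra.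
have t0 : 0 < t by rewrite /t; apply: divr_gt0; [exact: mulr_gt0 | lra].
have td : t < d by nra.
have htq : t * `|q| * (2 * (b + w)) = b * w.
  by transitivity (`|q| * (t * (2 * (b + w)))); [ring | rewrite ht /w; ring].
have tqb : t * `|q| < b by nra.
have tq : t * q <= t * `|q| by rewrite ler_pM2l //; exact: ler_norm.
have := h t; rewrite t0 td => /(_ isT).
rewrite FqDZ hS -/q -/B => hc.
have hbB : b = - B by [].
have k1 : 2 * B + t * q < 0 by lra.
have k : t * (2 * B + t * q) < 0 by rewrite pmulr_rlt0.
nra.
Qed.

End T6.

Section T7.
Variables (R : realType) (a c : R).
Local Notation A3 := 'rV[R]_6.
Local Notation F := (Fq a).

Ltac cdsimp7 := rewrite /Fq /Bf /Ip /Sc ?(cdD, cdZ, cdN, cdB, cd0).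

Lemma quot_eq (g : R -> A3) S : g 0 = S ->
  (fun h : R => h^-1 *: ((g \o shift 0) (h *: 1) - g 0)) = (fun h => h^-1 *: (g h - S)).
Proof. by move=> g0; apply: funext => h; rewrite /= addr0 g0 /GRing.scale /= mulr1. Qed.

Lemma deriv_quot (g : R -> A3) S X : g 0 = S -> derivable g 0 1 -> derive g 0 1 = X ->
  (fun h : R => h^-1 *: (g h - S)) @ 0^' --> X.
Proof.
move=> g0 gd gX; rewrite -(quot_eq g0) -gX; exact: gd.
Qed.

Lemma tangent_orth S X : tangent_vec (Nc a c) S X -> Bf a S X = 0.
Proof.
move=> [g [g0 gN gd gX]].
have hDq := deriv_quot g0 gd gX.
pose Dq := fun h : R => h^-1 *: (g h - S).
pose phi := fun h : R => 2 * Bf a S (Dq h) + h * F (Dq h).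
have l1 : phi @ 0^' --> 2 * Bf a S X + 0 * F X.
  apply: cvgD'; first by apply: cvgM'; [exact: cvg_cst | exact: (cvg_Bf (cvg_cst S) hDq)].
  apply: cvgM'; first exact: (@cvg_within _ (nbhs (0:R)) _ (fun y : R => y != 0)).
  exact: (cvg_Bf hDq hDq).
have FS : F S = c by rewrite -g0; exact: (nbhs_singleton gN).
have l2 : phi @ 0^' --> 0.
  apply: cvg_near_cst; rewrite near_withinE; apply: filterS gN => h hN hh.
  have hh0 : h != 0 by exact: hh.
  have e : g h = S + h *: Dq h by rewrite /Dq scalerA mulfV // scale1r addrC subrK.
  move: hN; rewrite /Nc /= e FqDZ FS => hN.
  have : h * phi h = 0 by rewrite /phi; lra.
  by move/eqP; rewrite mulf_eq0 (negbTE hh0) /= => /eqP.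
have e1 := cvg_lim (@norm_hausdorff _ R^o) l1; have e2 := cvg_lim (@norm_hausdorff _ R^o) l2.
have P0 : ProperFilter (0:R)^' by exact: Proper_dnbhs_numFieldType.
move: (e1 P0) (e2 P0) => {}e1 {}e2.
rewrite e2 mul0r addr0 in e1; lra.
Qed.

Lemma Bf_diff (S D Y1 Y0 : A3) (h : R) : h != 0 ->
  Bf a (S + h *: D) Y1 - Bf a S Y0 = h * (Bf a D Y1 + Bf a S (h^-1 *: (Y1 - Y0))).
Proof. by move=> hh; cdsimp7; field. Qed.

Lemma II_formula S T (Y : A3 -> A3) :
  tangent_vec (Nc a c) S T -> tangent_extension (Nc a c) S T Y ->
  Bf a S (derive Y S T) = - F T.
Proof.
move=> hT [YS dY hnear].
have BST : Bf a S T = 0 := tangent_orth hT.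
case: hT => g [g0 gN gd gX].
have hDq := deriv_quot g0 gd gX.
have dg : differentiable g 0 by apply/derivable1_diffP.
have gc : g @ (0:R) --> S by rewrite -g0; exact: differentiable_continuous.
have dYg : differentiable Y (g 0) by rewrite g0.
have dYgc : differentiable (Y \o g) 0 := differentiable_comp dg dYg.
have hchain : derive (Y \o g) 0 1 = derive Y S T.
  by rewrite deriveE // diff_comp //= -[X in 'd Y (g 0) X]deriveE // gX g0 deriveE.
have hDY : (fun h : R => h^-1 *: (Y (g h) - Y S)) @ 0^' --> derive Y S T.
  rewrite -hchain; apply: (deriv_quot (g := Y \o g)); first by rewrite /= g0.
    by apply/derivable1_diffP.
  by [].
have Ygc : (fun h : R => Y (g h)) @ 0^' --> T.
  apply: cvg_within_filter; rewrite -YS -g0.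
  exact: (differentiable_continuous dYgc).
pose phi := fun h : R => Bf a (h^-1 *: (g h - S)) (Y (g h)) + Bf a S (h^-1 *: (Y (g h) - Y S)).
have l1 : phi @ 0^' --> Bf a T T + Bf a S (derive Y S T).
  apply: cvgD'; first exact: (cvg_Bf hDq Ygc).
  exact: (cvg_Bf (cvg_cst S) hDY).
have l2 : phi @ 0^' --> 0.
  apply: cvg_near_cst; rewrite near_withinE.
  have hP := gc _ hnear.
  apply: filterS2 gN hP => h hN hP hh.
  have hh0 : h != 0 by exact: hh.
  have e0 : Bf a (g h) (Y (g h)) = 0 by apply: tangent_orth; exact: hP.
  have e : g h = S + h *: (h^-1 *: (g h - S)) by rewrite scalerA mulfV // scale1r addrC subrK.
  have := @Bf_diff S (h^-1 *: (g h - S)) (Y (g h)) (Y S) h hh0.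
  rewrite -e e0 YS BST subrr => /esym/eqP; rewrite mulf_eq0 (negbTE hh0) /= => /eqP.
  by rewrite /phi YS.
have e1 := cvg_lim (@norm_hausdorff _ R^o) l1; have e2 := cvg_lim (@norm_hausdorff _ R^o) l2.
have P0 : ProperFilter (0:R)^' by exact: Proper_dnbhs_numFieldType.
move: (e1 P0) (e2 P0) => {}e1 {}e2.
rewrite e2 in e1; rewrite /Fq; lra.
Qed.

Section CVV.
Context {T : Type} (Fl : set_system T) {FF : Filter Fl}.
Lemma cvgDv (f g : T -> A3) (p q : A3) : f @ Fl --> p -> g @ Fl --> q ->
  (fun t => f t + g t) @ Fl --> p + q.
Proof. exact: cvgD. Qed.
Lemma cvgZv (s : T -> R) (f : T -> A3) (k : R) (p : A3) : s @ Fl --> k -> f @ Fl --> p ->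
  (fun t => s t *: f t) @ Fl --> k *: p.
Proof. exact: cvgZ. Qed.
Lemma cvgV' (f : T -> R) (p : R) : p != 0 -> f @ Fl --> p -> (fun t => (f t)^-1) @ Fl --> p^-1.
Proof. exact: cvgV. Qed.
End CVV.

Lemma tangent_of_orth (hc0 : 0 < c) S X : F S = c -> Bf a S X = 0 ->
  tangent_vec (Nc a c) S X.
Proof.
move=> hS hB.
have cn0 : c != 0 by exact: lt0r_neq0.
pose q := F X.
pose k := fun t : R => c + t * t * q.
pose rho := fun t : R => Num.sqrt (c / k t).
pose g := fun t : R => rho t *: (S + t *: X).
have k0 : k 0 = c by rewrite /k !mul0r addr0.
have rho0 : rho 0 = 1 by rewrite /rho k0 divff // sqrtr1.
have g0 : g 0 = S by rewrite /g rho0 scale1r scale0r addr0.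
have kc : k @ (0:R) --> c.
  have : k @ (0:R) --> c + 0 * 0 * q.
    apply: cvgD'; first exact: cvg_cst.
    apply: cvgM'; last exact: cvg_cst.
    by apply: cvgM'; exact: cvg_id.
  by rewrite !mul0r addr0.
have kpos : \forall t \near (0:R), 0 < k t by exact: (cvgr_gt c kc 0 hc0).
have h1 : (fun t => c / k t) @ (0:R) --> (1:R).
  have : (fun t => c / k t) @ (0:R) --> c * c^-1.
    by apply: cvgM'; [exact: cvg_cst | exact: cvgV' cn0 kc].
  by rewrite divff.
have rhoc : rho @ (0:R) --> (1:R).
  have := @continuous_cvg _ _ _ (nbhs (0:R)) _ (fun t => c / k t) Num.sqrt 1 (@sqrt_continuous R 1) h1.
  by rewrite sqrtr1; apply.
pose psi := fun h : R => - (h * q) / (k h * (rho h + 1)).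
have psic : psi @ (0:R) --> (0:R).
  have : psi @ (0:R) --> - (0 * q) * (c * (1 + 1))^-1.
    apply: cvgM'.
      by apply: cvgN'; apply: cvgM'; [exact: cvg_id | exact: cvg_cst].
    apply: cvgV'; first by rewrite mulf_neq0 //; lra.
    apply: cvgM'; first exact: kc.
    by apply: cvgD'; [exact: rhoc | exact: cvg_cst].
  by rewrite mul0r oppr0 mul0r.
have hq : (fun h : R => h^-1 *: (g h - S)) @ 0^' --> X.
  have hl : (fun h : R => psi h *: S + rho h *: X) @ 0^' --> 0 *: S + 1 *: X.
    apply: cvgDv; apply: cvgZv; try exact: cvg_cst.
      exact: cvg_within_filter psic.
    exact: cvg_within_filter rhoc.
  rewrite scale0r add0r scale1r in hl.
  apply: cvg_trans hl; apply: near_eq_cvg.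
  rewrite near_withinE; apply: filterS kpos => h kh hh.
  have hh0 : h != 0 by exact: hh.
  have kn0 : k h != 0 by exact: lt0r_neq0.
  have rho_ge0 : 0 <= rho h by exact: sqrtr_ge0.
  have r1 : rho h + 1 != 0 by apply: lt0r_neq0; lra.
  have rsq : rho h ^+ 2 = c / k h by rewrite sqr_sqrtr // divr_ge0 // ltW.
  have hpsi : h^-1 * (rho h - 1) = psi h.
    have e : (rho h - 1) * (rho h + 1) = - (h * h * q) / k h.
      transitivity (rho h ^+ 2 - 1); first by ring.
      by rewrite rsq /k; field.
    have -> : rho h - 1 = (- (h * h * q) / k h) / (rho h + 1) by rewrite -e mulfK.
    by rewrite /psi; field; rewrite r1 kn0 hh0.
  apply/rowP => i; rewrite /g !mxE -hpsi.
  by field.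
exists g; split => //.
- apply: filterS kpos => t kt.
  rewrite /Nc /= /g FqZ FqDZ hS hB mulr0 addr0 sqr_sqrtr; last first.
    by rewrite divr_ge0 // ltW.
  by rewrite -/q /k; field; apply: lt0r_neq0; rewrite -/(k t).
- by apply: cvgP (_ : _ --> X); rewrite (quot_eq g0).
- rewrite /derive (quot_eq g0).
  have P0 : ProperFilter (0:R)^' by exact: Proper_dnbhs_numFieldType.
  exact: (cvg_lim (@norm_hausdorff _ _) hq).
Qed.

End T7.

Ltac cdsimp8 := rewrite /Fq /Bf /Ip /Sc ?(cdD, cdZ, cdN, cdB, cd0).

Lemma BfBZ (R : realType) (a : R) (S Z G : 'rV[R]_6) (k l : R) :
  Bf a S (k *: Z - l *: G) = k * Bf a S Z - l * Bf a S G.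
Proof. cdsimp8; ring. Qed.

Lemma IpBZ (R : realType) (Z G nu : 'rV[R]_6) (k l : R) :
  Ip (k *: Z - l *: G) nu = k * Ip Z nu - l * Ip G nu.
Proof. rewrite /Ip ?(cdD, cdZ, cdN, cdB); ring. Qed.

Lemma sqnorm_ge0 (R : realType) (x : 'rV[R]_6) : 0 <= A3sqnorm x.
Proof.
rewrite /A3sqnorm innerE /Ip.
have := sqr_ge0 (cd x 0); have := sqr_ge0 (cd x 1); have := sqr_ge0 (cd x 2);
have := sqr_ge0 (cd x 3); have := sqr_ge0 (cd x 4); have := sqr_ge0 (cd x 5).
rewrite !expr2; lra.
Qed.

Unset Implicit Arguments.
Theorem proposition3p10 (R : realType) (a c : R) :
  1 / 3 < a < 2 / 5 -> 0 < c ->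
  bianchi_convex (Omega_ac a c) /\ ~ convex_A3 (Omega_ac a c).
Proof.
move=> /andP[ha1 ha2] hc0.
split.
- split; first by rewrite OmegaE; exact: closed_Lec.
  move=> eps heps x0 hb.
  have hx0 := boundary_eq hb.
  exists (Nc a c), setT, (connected_component (Dc a c) 0),
    (connected_component (Dc a c) (p2 c)).
  split.
  + split.
    * split => //.
      move=> p hp; exists [set x | 0 < Fq a x], (fun x => Fq a x - c); split.
      - exact: ((continuousP _).1 (@Fq_cont _ a) _ (open_gt (y:=0))).
      - by rewrite /= hp.
      - exact: smooth_F.
      - move=> x hx; exists (Gv a x); rewrite derive_F -IpG.
        rewrite mulf_neq0 //; apply: lt0r_neq0; apply: Gv_pos.
        exact: lt0r_neq0.
      - apply/seteqP; split => x /=.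
        + by move=> [hN hV]; split => //; rewrite hN subrr.
        + move=> [hV e]; split => //; apply/eqP; rewrite -subr_eq0; apply/eqP; exact: e.
    * by split => //; exact: openT.
    * exact: two_comp.
    * move=> x [hx _]; rewrite OmegaE in hx.
      have := closure_Lt hc0 hx; apply: closureS => y hy. have h := Ltc_cc0 hc0 hy; exact h.
  + move=> S hS nu [_ hnuT hnuU] T hT hBi Y hY.
    have FS : Fq a S = c := hS.
    have [d d0 hd] := hnuU I.
    have B0 : 0 <= Bf a S nu.
      apply: (normal_sign FS d0) => t ht; exact: (cc_sub_Gt hc0 (hd t ht)).
    set G := Gv a S.
    have gam : 0 < Ip G G by apply: Gv_pos; rewrite FS; exact: lt0r_neq0.
    have hi : forall i, Ip G G * A3inner (derive (Y i) S (T i)) nu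
        = - Fq a (T i) * Bf a S nu.
      move=> i; set Z := derive (Y i) S (T i).
      have hZ : Bf a S Z = - Fq a (T i) := II_formula (hT i) (hY i).
      have hX : tangent_vec (Nc a c) S (Ip G G *: Z - Bf a S Z *: G).
        apply: tangent_of_orth => //.
        have e : Bf a S G = Ip G G by rewrite /G IpG.
        by rewrite BfBZ e; ring.
      have := hnuT _ hX; rewrite !innerE IpBZ /G IpG -hZ => e.
      rewrite IpG in e; lra.
    have hsum : Ip G G * \sum_i A3inner (derive (Y i) S (T i)) nu
        = - Bf a S nu * \sum_i Fq a (T i).
      rewrite !mulr_sumr; apply: eq_bigr => i _; rewrite hi; ring.
    have hF : 0 <= \sum_i Fq a (T i).
      have := @bianchi_nonneg R a T (ltW ha2) hBi.
      by under eq_bigr do rewrite sqnE.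
    have hN : 0 <= \sum_i A3sqnorm (T i) by apply: sumr_ge0 => i _; exact: sqnorm_ge0.
    have hle : \sum_i A3inner (derive (Y i) S (T i)) nu <= 0.
      rewrite -(pmulr_rle0 _ gam) hsum.
      have := mulr_ge0 B0 hF; lra.
    apply: le_trans hle _; apply: mulr_ge0 => //; exact: ltW.
- move=> hconv.
  pose p := c + 1.
  pose k := 9 * a - 3.
  have k0 : 0 < k by rewrite /k; lra.
  have k2 : k <= 2 by rewrite /k; lra.
  pose s := 2 * p / k.
  have sk : s * k = 2 * p by rewrite /s divfK //; exact: lt0r_neq0.
  pose P : 'rV[R]_6 := mk6 [:: 0; 0; 0; p; 0; 0].
  have FP : Fq a P = 2 * p ^+ 2 by rewrite /P; cdsimp8; rewrite !cd_mk6 //=; ring.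
  have BPi : Bf a P (@idv R) = 0 by rewrite /P /idv; cdsimp8; rewrite !cd_mk6 //=; ring.
  have Fi : Fq a (@idv R) = - k by rewrite /idv /k; cdsimp8; rewrite !cd_mk6 //=; ring.
  have p0 : 0 < p by rewrite /p; lra.
  have sp : p <= s by nra.
  have hx : Omega_ac a c (P + s *: @idv R).
    rewrite OmegaE /= FqDZ FP BPi Fi; nra.
  have hy : Omega_ac a c (P + (- s) *: @idv R).
    rewrite OmegaE /= FqDZ FP BPi Fi; nra.
  have := hconv _ _ (1/2) hx hy ltac:(apply/andP; split; lra).
  rewrite (_ : (1 - 1/2) *: (P + s *: @idv R) + 1/2 *: (P + (- s) *: @idv R) = P).
    by rewrite OmegaE /= FP /p; nra.
  by apply/rowP => i; rewrite !mxE; field.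
Qed.
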